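(* Let $X$ be a real Banach space and let $A \subset X$ be a balanced, bounded, convex, closed subset. Assume there is a finite subset $O \subset X$ such that $B_X \subset A + O$. Then for every $\lambda$ with $0<\lambda < 1/2$, $A$ contains a finite-codimensional ball of radius $\lambda$, i.e. there exist $x \in A$ and a finite-codimensional linear subspace $Y \subset X$ with $x + \lambda B_Y \subset A$.
   Context: $B_X$ is the closed unit ball of $X$ and $B_Y = B_X \cap Y$. $A$ is balanced if $tA \subset A$ for all $|t| \le 1$. $A + O$ is the Minkowski sum $\{a+o: a\in A, o\in O\}$. *)

(* Defs.v *)
From HB Require Import structures.
From mathcomp Require Import all_boot all_order all_algebra.
From mathcomp Require Import all_classical all_reals all_analysis.
Set Implicit Arguments. Unset Strict Implicit. Unset Printing Implicit Defensive.
Import Order.TTheory GRing.Theory Num.Theory.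
Local Open Scope classical_set_scope.
Local Open Scope ring_scope.

Definition balanced_set (R : realType) (X : normedModType R) (A : set X) :=
  forall (t : R) (a : X), `|t| <= 1 -> A a -> A (t *: a).

Definition norm_bounded (R : realType) (X : normedModType R) (A : set X) :=
  exists M : R, forall a, A a -> `|a| <= M.

Definition convex_subset (R : realType) (X : normedModType R) (A : set X) :=
  forall (a b : X) (t : R), A a -> A b -> 0 <= t -> t <= 1 ->
    A (t *: a + (1 - t) *: b).

Definition unit_ball (R : realType) (X : normedModType R) : set X :=
  [set x | `|x| <= 1].

Definition minkowski_sum (R : realType) (X : normedModType R) (A O : set X)
  : set X := [set a + o | a in A & o in O].

Definition linear_subspace (R : realType) (X : normedModType R) (Y : set X) :=
  Y 0 /\ (forall y z, Y y -> Y z -> Y (y + z)) /\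
  (forall (c : R) y, Y y -> Y (c *: y)).

Definition finite_codim (R : realType) (X : normedModType R) (Y : set X) :=
  exists s : seq X, forall x : X, exists2 y, Y y &
    exists c : 'I_(size s) -> R, x = y + \sum_(i < size s) c i *: s`_i.

Definition translated_ball (R : realType) (X : normedModType R)
  (x : X) (lam : R) (Y : set X) : set X :=
  [set x + lam *: y | y in @unit_ball R X `&` Y].

(* Main.v *)
Require Import Defs.
From HB Require Import structures.
From mathcomp Require Import all_boot all_order all_algebra.
From mathcomp Require Import all_classical all_reals all_analysis.
From mathcomp Require Import ring lra zify.
Import Order.TTheory GRing.Theory Num.Theory.
Local Open Scope classical_set_scope.
Local Open Scope ring_scope.
Lemma sub_neg {R : realType} {X : normedModType R} {p : X -> R}
  (padd : forall x y, p (x + y) <= p x + p y) (p0 : p 0 = 0) x :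
  - p (- x) <= p x.
Proof.
have := padd x (- x); rewrite subrr p0 => h.
by rewrite lerNl -subr_ge0 opprK addrC.
Qed.

Lemma hb {R : realType} {X : normedModType R} (p : X -> R)
  (padd : forall x y, p (x + y) <= p x + p y)
  (phom : forall (c : R) x, 0 < c -> p (c *: x) = c * p x)
  (p0 : p 0 = 0) (z : X) :
  exists f : X -> R, [/\ (forall x y, f (x + y) = f x + f y),
     (forall (c : R) x, f (c *: x) = c * f x), f z = p z & forall x, f x <= p x].
Proof.
pose G0 : set (X * R) := [set u | exists s : R, u = (s *: z, s * p z)].
pose Pg (G : set (X * R)) :=
  [/\ forall u v, G u -> G v -> G (u.1 + v.1, u.2 + v.2),
      forall (c : R) u, G u -> G (c *: u.1, c * u.2),
      forall u, G u -> u.2 <= p u.1 & G0 `<=` G].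
pose P := [set G | G = set0 \/ Pg G].
have PgG0 : Pg G0.
  split.
  - by move=> _ _ [s1 ->] [s2 ->]; exists (s1 + s2); rewrite /= scalerDl mulrDl.
  - by move=> c _ [s ->]; exists (c * s); rewrite /= scalerA mulrA.
  - move=> _ [s ->] /=.
    have [s0|s0|->] := ltgtP s 0; last by rewrite scale0r mul0r p0.
    + have := sub_neg padd p0 (s *: z).
      rewrite -scaleNr (phom (- s)); last by rewrite oppr_gt0.
      by rewrite mulNr opprK.
    + by rewrite phom.
  - by [].
have nzG0 : G0 !=set0 by exists (0 *: z, 0 * p z); exists 0.
have [M [PM Mmax]] : exists M, P M /\ forall B, M `<` B -> ~ P B.
  apply: Zorn_bigcup => F FP Ftot.
  have PgF : forall G, F G -> G !=set0 -> Pg G.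
    move=> G FG [u Gu]; case: (FP G FG) => // G0e.
    by move: Gu; rewrite G0e.
  case: (pselect (exists G, F G /\ G !=set0)) => [[G [FG nG]]|nG]; last first.
    left; apply/seteqP; split => // u [G1 FG Gu]; apply: nG.
    by exists G1; split => //; exists u.
  right; split.
  - move=> u v [G1 FG1 G1u] [G2 FG2 G2v].
    have [G12|G21] := Ftot _ _ FG1 FG2.
    + have [h _ _ _] := PgF G2 FG2 (ex_intro _ v G2v).
      by exists G2 => //; apply: h => //; apply: G12.
    + have [h _ _ _] := PgF G1 FG1 (ex_intro _ u G1u).
      by exists G1 => //; apply: h => //; apply: G21.
  - move=> c u [G1 FGu Gu]; have [_ h _ _] := PgF G1 FGu (ex_intro _ u Gu).
    by exists G1 => //; apply: h.
  - move=> u [G1 FGu Gu]; have [_ _ h _] := PgF G1 FGu (ex_intro _ u Gu).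
    exact: h.
  - have [_ _ _ h] := PgF G FG nG.
    by move=> u G0u; exists G => //; apply: h.
have PgM : Pg M.
  case: PM => // M0; exfalso; apply: (Mmax G0); last by right.
  rewrite M0; split => //; move=> /(_ _ (projT2 (cid nzG0))) //.
have [Madd Mscale Mdom MG0] := PgM.
have Muniq : forall x r r', M (x, r) -> M (x, r') -> r = r'.
  move=> x r r' h1 h2.
  have h3 := Madd _ _ h1 (Mscale (-1) _ h2); rewrite /= scaleN1r subrr mulN1r in h3.
  have h4 := Madd _ _ h2 (Mscale (-1) _ h1); rewrite /= scaleN1r subrr mulN1r in h4.
  have := Mdom _ h3; have := Mdom _ h4; rewrite /= p0 !subr_le0 => ??.
  by apply/eqP; rewrite eq_le; apply/andP.
have Mtot : forall x0, exists r, M (x0, r).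
  move=> x0; apply: contrapT => nx0.
  have M00 : M (0, 0) by apply: MG0; exists 0; rewrite scale0r mul0r.
  pose S := [set w | exists x r, M (x, r) /\ w = r - p (x - x0)].
  have key : forall x r y s, M (x, r) -> M (y, s) -> r - p (x - x0) <= p (y + x0) - s.
    move=> x r y s hxr hys.
    have := Mdom _ (Madd _ _ hxr hys) => /= h.
    have := padd (x - x0) (y + x0).
    have -> : x - x0 + (y + x0) = x + y by rewrite addrA addrAC subrK.
    move=> h'; lra.
  have Sub : has_ubound S.
    by exists (p (0 + x0) - 0) => _ [x [r [hxr ->]]]; apply: key.
  have Sne : S !=set0 by exists (0 - p (0 - x0)); exists 0, 0.
  pose c := sup S.
  have c1 : forall x r, M (x, r) -> r - p (x - x0) <= c.
    by move=> x r hxr; apply: ub_le_sup => //; exists x, r.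
  have c2 : forall y s, M (y, s) -> c <= p (y + x0) - s.
    by move=> y s hys; apply: ge_sup => // _ [x [r [hxr ->]]]; apply: key.
  pose G' : set (X * R) := [set u | exists x r t, M (x, r) /\ u = (x + t *: x0, r + t * c)].
  apply: (Mmax G'); last first.
    right; split.
    - move=> _ _ [x1 [r1 [t1 [h1 ->]]]] [x2 [r2 [t2 [h2 ->]]]] /=.
      exists (x1 + x2), (r1 + r2), (t1 + t2); split; first exact: (Madd _ _ h1 h2).
      by congr pair; rewrite ?scalerDl ?mulrDl; [rewrite addrACA | rewrite addrACA].
    - move=> d _ [x [r [t [h ->]]]] /=.
      exists (d *: x), (d * r), (d * t); split; first exact: (Mscale d _ h).
      by rewrite scalerDr scalerA mulrDr mulrA.
    - move=> _ [x [r [t [h ->]]]] /=.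
      have [t0|t0|->] := ltgtP t 0; last by rewrite scale0r addr0 mul0r addr0; exact: (Mdom _ h).
      + have u0 : 0 < - t by rewrite oppr_gt0.
        have h1 := c1 _ _ (Mscale (- t)^-1 _ h); rewrite /= in h1.
        have e : p (x + t *: x0) = (- t) * p ((- t)^-1 *: x - x0).
          rewrite -phom //; congr p.
          by rewrite scalerBr scalerA mulrV ?unitfE ?gt_eqF// scale1r scaleNr opprK.
        rewrite e.
        have := ler_wpM2l (ltW u0) h1.
        rewrite mulrBr mulrA mulrV ?unitfE ?gt_eqF// mul1r => h2.
        nra.
      + have h1 := c2 _ _ (Mscale t^-1 _ h); rewrite /= in h1.
        have e : p (x + t *: x0) = t * p (t^-1 *: x + x0).
          rewrite -phom //; congr p.
          by rewrite scalerDr scalerA mulrV ?unitfE ?gt_eqF// scale1r.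
        rewrite e.
        have := ler_wpM2l (ltW t0) h1.
        rewrite mulrBr mulrA mulrV ?unitfE ?gt_eqF// mul1r => h2.
        nra.
    - by move=> u /MG0 hu; exists u.1, u.2, 0; split; [case: u hu|rewrite scale0r mul0r !addr0; case: u hu].
  split.
  - move=> [x r] h; exists x, r, 0; split => //.
    by rewrite scale0r mul0r !addr0.
  - move=> /(_ (x0, c)) h; apply: nx0; exists c.
    apply: h; exists 0, 0, 1; split => //.
    by rewrite add0r scale1r add0r mul1r.
pose f x := projT1 (cid (Mtot x)).
have Mf : forall x, M (x, f x) by move=> x; exact: (projT2 (cid (Mtot x))).
exists f; split.
- move=> x y; apply: (Muniq (x + y)); first exact: Mf.
  exact: (Madd _ _ (Mf x) (Mf y)).
- move=> d x; apply: (Muniq (d *: x)); first exact: Mf.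
  exact: (Mscale d _ (Mf x)).
- apply: (Muniq z); first exact: Mf.
  by apply: MG0; exists 1; rewrite scale1r mul1r.
- by move=> x; exact: (Mdom _ (Mf x)).
Qed.
Lemma sep {R : realType} {X : normedModType R} (A : set X) (lam : R) (z : X) :
  balanced_set A -> convex_subset A -> closed A -> A 0 -> 0 < lam -> lam < 1 / 2 ->
  ~ A (lam *: z) ->
  exists f : X -> R, [/\ (forall x y, f (x + y) = f x + f y),
     (forall (c : R) x, f (c *: x) = c * f x), f z = 1 &
     forall a, A a -> `|f a| < 1 / 2].
Proof.
move=> bal cvx cl A0 lam0 lam2 nA.
have [d d0 hd] : exists2 d : R, 0 < d & forall a, A a -> d <= `|lam *: z - a|.
  have : open (~` A) by rewrite openC.
  rewrite openE => /(_ _ nA) /nbhs_ballP [d d0 hd].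
  exists d => // a Aa; rewrite leNgt; apply/negP => h.
  by apply: (hd a) => //; rewrite -ball_normE /ball_ /=.
pose V (x : X) := [set v : R | exists t a, [/\ 0 <= t, A a & v = t + `|x - t *: a| / d]].
pose q x := inf (V x).
have Vne : forall x, V x !=set0.
  by move=> x; exists (0 + `|x - 0 *: 0| / d); exists 0, 0.
have Vlb : forall x, has_lbound (V x).
  move=> x; exists 0 => _ [t [a [t0 Aa ->]]].
  by rewrite addr_ge0 // divr_ge0 // ltW.
have qle : forall x v, V x v -> q x <= v by move=> x v Vv; exact: ge_inf.
have qge : forall x m, (forall v, V x v -> m <= v) -> m <= q x.
  by move=> x m h; apply: lb_le_inf.
have q0 : q 0 = 0.
  apply/eqP; rewrite eq_le; apply/andP; split.
    by apply: (qle); exists 0, 0; split => //; rewrite scale0r subr0 normr0 mul0r addr0.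
  by apply: (qge) => _ [t [a [t0 Aa ->]]]; rewrite addr_ge0 // divr_ge0 // ltW.
have key : forall x y v1 v2, V x v1 -> V y v2 -> q (x + y) <= v1 + v2.
  move=> x y _ _ [t1 [a1 [t10 Aa1 ->]]] [t2 [a2 [t20 Aa2 ->]]].
  have [t12|t12] := eqVneq (t1 + t2) 0.
    move/eqP: t12 => t12.
    have e1 : t1 = 0 by lra.
    have e2 : t2 = 0 by lra.
    apply: (@le_trans _ _ (0 + `|x + y - 0 *: a1| / d)).
      by apply: (qle); exists 0, a1.
    rewrite e1 e2 !scale0r !subr0 !add0r -mulrDl.
    by apply: ler_wpM2r; [rewrite invr_ge0 ltW | exact: ler_normD].
  have tp : 0 < t1 + t2 by rewrite lt_def t12 addr_ge0.
  pose s := t1 / (t1 + t2).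
  have s0 : 0 <= s by apply: divr_ge0 => //; exact: ltW.
  have s1 : s <= 1 by rewrite ler_pdivrMr // mul1r lerDl.
  have As := cvx _ _ s Aa1 Aa2 s0 s1.
  have e : (t1 + t2) *: (s *: a1 + (1 - s) *: a2) = t1 *: a1 + t2 *: a2.
    rewrite scalerDr !scalerA /s mulrC -mulrA mulVf // mulr1; congr (_ + _).
    congr (_ *: _); rewrite mulrBr mulr1 mulrCA mulfV // mulr1; ring.
  apply: (@le_trans _ _ ((t1 + t2) + `|x + y - (t1 + t2) *: (s *: a1 + (1 - s) *: a2)| / d)).
    by apply: (qle); exists (t1 + t2), (s *: a1 + (1 - s) *: a2); split => //; exact: ltW.
  rewrite e.
  have : `|x + y - (t1 *: a1 + t2 *: a2)| <= `|x - t1 *: a1| + `|y - t2 *: a2|.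
    have -> : x + y - (t1 *: a1 + t2 *: a2) = (x - t1 *: a1) + (y - t2 *: a2).
      by rewrite opprD addrACA.
    exact: ler_normD.
  move=> h.
  have : `|x + y - (t1 *: a1 + t2 *: a2)| / d <= `|x - t1 *: a1| / d + `|y - t2 *: a2| / d.
    by rewrite -mulrDl; apply: ler_wpM2r; [rewrite invr_ge0 ltW|].
  lra.
have qadd : forall x y, q (x + y) <= q x + q y.
  move=> x y.
  have h : q (x + y) - q y <= q x; last by lra.
  apply: (qge) => v1 V1.
  have h : q (x + y) - v1 <= q y; last by lra.
  apply: (qge) => v2 V2.
  have := key _ _ _ _ V1 V2; lra.
have qhle : forall (c : R) x, 0 < c -> q (c *: x) <= c * q x.
  move=> c x c0.
  rewrite -(ler_pdivrMl _ _ c0).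
  apply: (qge) => _ [t [a [t0 Aa ->]]].
  rewrite (ler_pdivrMl _ _ c0).
  apply: (qle); exists (c * t), a; split => //; first by apply: mulr_ge0 => //; exact: ltW.
  rewrite mulrDr mulrA -scalerA -scalerBr normrZ gtr0_norm //.
have qhom : forall (c : R) x, 0 < c -> q (c *: x) = c * q x.
  move=> c x c0; apply/eqP; rewrite eq_le qhle //=.
  have ic : 0 < c^-1 by rewrite invr_gt0.
  have := qhle _ (c *: x) ic; rewrite scalerA mulVf ?gt_eqF // scale1r => h.
  by rewrite -(ler_pdivlMl _ _ c0).
have qA : forall a, A a -> q a <= 1.
  move=> a Aa; apply: (qle); exists 1, a; split => //.
  by rewrite scale1r subrr normr0 mul0r addr0.
have qz : lam^-1 <= q z.
  apply: (qge) => _ [t [a [t0 Aa ->]]].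
  have [lt1|lt1] := lerP (lam * t) 1.
    have Ala : A ((lam * t) *: a).
      by apply: bal => //; rewrite ger0_norm // mulr_ge0 // ltW.
    have := hd _ Ala.
    rewrite -scalerA -scalerBr normrZ gtr0_norm // => h.
    have : lam^-1 <= `|z - t *: a| / d.
      by rewrite (ler_pdivlMr _ _ d0) (ler_pdivrMl _ _ lam0).
    lra.
  have : lam^-1 < t by rewrite -[lam^-1]mulr1 (ltr_pdivrMl _ _ lam0).
  have : 0 <= `|z - t *: a| / d by rewrite divr_ge0 // ltW.
  lra.
have [g [gadd gsc gz gle]] := hb q qadd qhom q0 z.
have qzp : 0 < q z.
  apply: lt_le_trans qz; by rewrite invr_gt0.
exists (fun x => g x / q z); split.
- by move=> x y; rewrite gadd mulrDl.
- by move=> c x; rewrite gsc mulrA.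
- by rewrite gz mulfV // gt_eqF.
move=> a Aa.
have h1 : g a <= 1 := le_trans (gle a) (qA a Aa).
have h2 : - g a <= 1.
  have := le_trans (gle _) (qA _ (bal (-1) a _ Aa)).
  by rewrite normrN normr1 => /(_ (lexx _)); rewrite gsc mulN1r.
have iq : 0 < (q z)^-1 by rewrite invr_gt0.
rewrite normrM (gtr0_norm iq).
have ga : `|g a| <= 1 by rewrite ler_norml; apply/andP; split => //; lra.
apply: (@le_lt_trans _ _ (1 * (q z)^-1)).
  by apply: ler_wpM2r => //; exact: ltW.
rewrite mul1r.
apply: (@le_lt_trans _ _ lam) => //.
by rewrite -(invrK lam) lef_pV2 // posrE invr_gt0.
Qed.
Lemma sum_cons {R : realType} {X : normedModType R} (z : X) (s : seq X)
  (c : 'I_(size s) -> R) (a : R) : exists c' : 'I_(size (z :: s)) -> R,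
  \sum_(i < size (z :: s)) c' i *: (z :: s)`_i = a *: z + \sum_(i < size s) c i *: s`_i.
Proof.
exists (fun i : 'I_(size s).+1 =>
    match unlift ord0 i with Some j => c j | None => a end).
rewrite big_ord_recl unlift_none; congr (_ + _).
apply: eq_bigr => i _.
rewrite (@liftK (size s).+1 ord0 i).
done.
Qed.
Lemma main_ind {R : realType} {X : normedModType R} (A : set X) (lam : R) :
  balanced_set A -> convex_subset A -> closed A -> A 0 -> 0 < lam -> lam < 1 / 2 ->
  (forall Z : set X, linear_subspace Z -> finite_codim Z ->
     exists y, [/\ Z y, `|y| <= 1 & ~ A (lam *: y)]) ->
  forall (s : seq X) (Z : set X), linear_subspace Z -> finite_codim Z ->
  (forall y, Z y -> `|y| <= 1 -> exists2 o, o \in s & A (- y - o)) -> False.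
Proof.
move=> bal cvx cl A0 l0 l2 H s.
move: {2}(size s) (leqnn (size s)) => n; elim: n s => [|n IH] s hs Z lin fc cov.
  have n1 : `|0 : X| <= 1 by rewrite normr0 ler01.
  have [w1 ws _] := cov 0 (proj1 lin) n1.
  by move: ws; case: s hs cov.
have [z [Zz z1 nAz]] := H Z lin fc.
have [f [fadd fsc fz fA]] := sep A lam z bal cvx cl A0 l0 l2 nAz.
have fN : forall x, f (- x) = - f x.
  by move=> x; rewrite -scaleN1r fsc mulN1r.
have f0 : f 0 = 0 by rewrite -(scale0r 0) fsc mul0r.
have [w1 ws Ao1] := cov z Zz z1.
have [Z0 [Zadd Zsc]] := lin.
pose Z' := Z `&` [set x | f x = 0].
have lin' : linear_subspace Z'.
  split; first by split.
  split.
    by move=> x y [Zx fx] [Zy fy]; split; [exact: Zadd|rewrite /= fadd fx fy addr0].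
  by move=> c x [Zx fx]; split; [exact: Zsc|rewrite /= fsc fx mulr0].
have fc' : finite_codim Z'.
  have [sZ hsZ] := fc.
  exists (z :: sZ) => x.
  have [y Zy [c ->]] := hsZ x.
  exists (y - f y *: z).
    split; first by apply: Zadd => //; rewrite -scaleNr; exact: Zsc.
    by rewrite /= fadd fN fsc fz mulr1 subrr.
  have [c' hc'] := sum_cons z sZ c (f y).
  exists c'; rewrite hc'.
  by rewrite addrA subrK.
apply: (IH (seq.filter (predC1 w1) s) _ Z' lin' fc').
  have hc := count_predC (pred1 w1) s.
  have hp : (0 < count (pred1 w1) s)%N by rewrite -has_count has_pred1.
  rewrite size_filter.
  have -> : count (predC1 w1) s = count (predC (pred1 w1)) s by apply: eq_count.
  move: hs hp; rewrite -hc; lia.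
move=> y [Zy fy] y1.
have [w2 ws2 Ao2] := cov y Zy y1.
have [e|ne] := eqVneq w2 w1.
  exfalso.
  have h1 := fA _ Ao1; have h2 := fA _ Ao2.
  have E1 : f (- z - w1) = -1 - f w1 by rewrite fadd !fN fz.
  have E2 : f (- y - w1) = - f w1 by rewrite fadd !fN fy oppr0 add0r.
  rewrite E1 in h1; rewrite e E2 in h2.
  move: h1 h2; rewrite !ltr_norml => /andP[? ?] /andP[? ?]; lra.
exists w2 => //; by rewrite mem_filter /= ne.
Qed.
Theorem corollary4p3 (R : realType) (X : completeNormedModType R) (A : set X) :
  balanced_set A -> norm_bounded A -> convex_subset A -> closed A ->
  (exists O : set X, finite_set O /\ @unit_ball R X `<=` minkowski_sum A O) ->
  forall lam : R, 0 < lam -> lam < 1 / 2 ->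
    exists x : X, exists Y : set X,
      A x /\ linear_subspace Y /\ finite_codim Y /\ translated_ball x lam Y `<=` A.
Proof.
move=> bal _ cvx cl [S0 [finO cov]] lam l0 l2.
have A0 : A 0.
  have : unit_ball (0 : X) by rewrite /unit_ball /= normr0 ler01.
  move=> /cov [a Aa [w Ow _]].
  by rewrite -(scale0r a); apply: bal => //; rewrite normr0 ler01.
apply: contrapT => nH.
have H : forall Z : set X, linear_subspace Z -> finite_codim Z ->
     exists y, [/\ Z y, `|y| <= 1 & ~ A (lam *: y)].
  move=> Z lin fc; apply: contrapT => nZ; apply: nH.
  exists 0, Z; split => //; split => //; split => //.
  move=> _ [y [y1 Zy] <-]; rewrite add0r.
  apply: contrapT => nA; apply: nZ; exists y; split => //.
have [s Os] := (finite_seqP S0).1 finO.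
apply: (main_ind A lam bal cvx cl A0 l0 l2 H s setT).
- split => //.
- by exists [::] => x; exists x => //; exists (fun _ => 0); rewrite big_ord0 addr0.
move=> y _ y1.
have : unit_ball (- y) by rewrite /unit_ball /= normrN.
move=> /cov [a Aa [w Ow e]].
exists w; first by move: Ow; rewrite Os.
by rewrite -e addrK.
Qed.
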